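(* Let $(\mathcal L,\langle\,,\,\rangle)$ be a (right) Leibniz algebra over a field $\mathbf{k}$ (any dimension and characteristic) with basis $X=\{x_j\mid j\in J\}$, and let $k\in\mathbf{k}$ be nonzero. Let $((\hat A,\hat q),\hat i)$ be the free invariant algebra generated by $X$ (constructed as below), extend $\hat i$ linearly to an injective linear map $\mathcal L\to\hat A$, $x\mapsto\hat x$, and let $R$ be the two-sided ideal of $\hat A$ generated by all elements $$\widehat{\langle x,y\rangle}-\hat x\hat y+\hat y\hat x-\hat y\hat q\hat x+\hat x\hat y\hat q-k\hat x\hat q\hat y+k\hat q\hat y\hat x,\qquad x,y\in\mathcal L.$$ Let $\mathcal U:=\hat A/R$, $\bar q:=\hat q+R$, $i(x):=\hat x+R$. Then $((\mathcal U,\bar q),i)$ is the enveloping$^{\langle4\text{-th}\rangle}$ algebra of $(\mathcal L,\langle\,,\,\rangle)$.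
   Context: Right Leibniz algebra: bilinear $\langle\,,\,\rangle$ with $\langle\langle x,y\rangle,z\rangle=\langle x,\langle y,z\rangle\rangle+\langle\langle x,z\rangle,y\rangle$. Invariant algebra: for an associative algebra $A$ (with identity) and idempotent $q$, $(A,q):=\{a\in A\mid qaq=qa\}$; it is a Leibniz algebra $Leib((A,q),\langle\,,\,\rangle_{4,k})$ under $\langle a,b\rangle_{4,k}:=ab-ba+bqa-abq+kaqb-kqba$. Invariant homomorphism $(A,q_A)\to(B,q_B)$: linear, multiplicative, $1_A\mapsto1_B$, $q_A\mapsto q_B$. Free invariant algebra on $X$: $V$ with basis $X\cup\{\tilde q\}$ ($\tilde q\notin X$), $I\subseteq T(V)$ the ideal generated by $\tilde q\otimes\tilde q-\tilde q$ and $\tilde q\otimes a\otimes\tilde q-\tilde q\otimes a$ ($a\in T(V)$), $\hat A=T(V)/I$, $\hat q=\tilde q+I$, $\hat i(x_j)=x_j+I$ (these are linearly independent). An enveloping$^{\langle4\text{-th}\rangle}$ algebra of $\mathcal L$ is a pair $((\mathcal U,\bar q),i)$ with $(\mathcal U,\bar q)$ an invariant algebra and $i:\mathcal L\to(\mathcal U,\bar q)$ such that (i) $i$ is a Leibniz algebra homomorphism $\mathcal L\to Leib((\mathcal U,\bar q),\langle\,,\,\rangle_{4,k})$, i.e. $i(\langle x,y\rangle)=i(x)i(y)-i(y)i(x)+i(y)\bar qi(x)-i(x)i(y)\bar q+ki(x)\bar qi(y)-k\bar qi(y)i(x)$, and (ii) for every invariant algebra $(A,q)$ and every Leibniz homomorphism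 $f:\mathcal L\to Leib((A,q),\langle\,,\,\rangle_{4,k})$ there is a unique invariant homomorphism $f':(\mathcal U,\bar q)\to(A,q)$ with $f=f'\circ i$. *)

(* Defs.v *)
From HB Require Import structures.
From mathcomp Require Import all_boot all_order all_algebra.
From Stdlib Require Import ClassicalEpsilon.
Set Implicit Arguments. Unset Strict Implicit. Unset Printing Implicit Defensive.
Import GRing.Theory.
Local Open Scope ring_scope.

Section Defs.
Variable F : fieldType.

Definition right_leibniz (L : lmodType F) (br : L -> L -> L) : Prop :=
  [/\ (forall (a : F) (x y z : L), br (a *: x + y) z = a *: br x z + br y z),
      (forall (a : F) (x y z : L), br x (a *: y + z) = a *: br x y + br x z) &
      (forall x y z : L, br (br x y) z = br x (br y z) + br (br x z) y)].

Definition is_basis (L : lmodType F) (J : eqType) (x : J -> L) : Prop :=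
  (forall v : L, exists (s : seq J) (c : J -> F), v = \sum_(j <- s) c j *: x j) /\
  (forall (s : seq J) (c : J -> F), uniq s ->
      \sum_(j <- s) c j *: x j = 0 -> forall j, j \in s -> c j = 0).

Definition br4 (A : algType F) (k : F) (q : A) (a b : A) : A :=
  a * b - b * a + b * q * a - a * b * q + k *: (a * q * b) - k *: (q * b * a).

Definition inv_mem (A : algType F) (q a : A) : Prop := q * a * q = q * a.

Record algops := AlgOps {
  acar :> Type;
  azero : acar; aone : acar;
  aadd : acar -> acar -> acar; aopp : acar -> acar;
  ascale : F -> acar -> acar; amul : acar -> acar -> acar }.

Definition is_unital_algebra (U : algops) : Prop :=
  let O := azero U in let I := aone U in let add := @aadd U in
  let opp := @aopp U in let sc := @ascale U in let mul := @amul U in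
  (forall a b c, add a (add b c) = add (add a b) c) /\
  (forall a b, add a b = add b a) /\
  (forall a, add O a = a) /\
  (forall a, add (opp a) a = O) /\
  (forall (r s : F) a, sc r (sc s a) = sc (r * s) a) /\
  (forall a, sc 1 a = a) /\
  (forall (r : F) a b, sc r (add a b) = add (sc r a) (sc r b)) /\
  (forall (r s : F) a, sc (r + s) a = add (sc r a) (sc s a)) /\
  (forall a b c, mul a (mul b c) = mul (mul a b) c) /\
  (forall a, mul I a = a) /\ (forall a, mul a I = a) /\
  (forall a b c, mul a (add b c) = add (mul a b) (mul a c)) /\
  (forall a b c, mul (add a b) c = add (mul a c) (mul b c)) /\
  (forall (r : F) a b, sc r (mul a b) = mul (sc r a) b) /\
  (forall (r : F) a b, sc r (mul a b) = mul a (sc r b)).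

Definition br4U (U : algops) (k : F) (q a b : U) : U :=
  let add := @aadd U in let opp := @aopp U in let sc := @ascale U in
  let mul := @amul U in
  add (add (add (add (add (mul a b) (opp (mul b a))) (mul (mul b q) a))
       (opp (mul (mul a b) q))) (sc k (mul (mul a q) b)))
      (opp (sc k (mul (mul q b) a))).

Definition inv_memU (U : algops) (q a : U) : Prop :=
  amul (amul q a) q = amul q a.

Definition inv_hom (U : algops) (qbar : U) (A : algType F) (q : A) (g : U -> A)
  : Prop :=
  [/\ (forall u v, inv_memU qbar u -> inv_memU qbar v -> g (aadd u v) = g u + g v),
      (forall (r : F) u, inv_memU qbar u -> g (ascale r u) = r *: g u),
      (forall u v, inv_memU qbar u -> inv_memU qbar v -> g (amul u v) = g u * g v),
      g (aone U) = 1 /\ g qbar = q &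
      (forall u, inv_memU qbar u -> inv_mem q (g u))].

Definition enveloping4 (L : lmodType F) (br : L -> L -> L) (k : F)
  (U : algops) (qbar : U) (i : L -> U) : Prop :=
  [/\ is_unital_algebra U,
      amul qbar qbar = qbar /\
      (* i is a Leibniz algebra homomorphism L -> Leib((U,qbar),<,>_{4,k}) *)
      (forall v, inv_memU qbar (i v)),
      (forall (a : F) u v, i (a *: u + v) = aadd (ascale a (i u)) (i v)),
      (forall u v, i (br u v) = br4U k qbar (i u) (i v)) &
      (forall (A : algType F) (q : A), q * q = q ->
       forall f : L -> A,
         (forall v, inv_mem q (f v)) ->
         (forall (a : F) u v, f (a *: u + v) = a *: f u + f v) ->
         (forall u v, f (br u v) = br4 k q (f u) (f v)) ->
         exists f' : U -> A,
           [/\ inv_hom qbar q f',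
               (forall v, f v = f' (i v)) &
               (forall g : U -> A, inv_hom qbar q g ->
                  (forall v, f v = g (i v)) ->
                  forall u, inv_memU qbar u -> g u = f' u)])].

(* ---------- Free unital associative algebra T(V), V with basis J + {q~} ---------- *)
(* formal expressions; T(V) is their quotient by the algebra axioms *)
Inductive term (J : Type) : Type :=
| Tgen of J | Tq | Tzero | Tone
| Tadd of term J & term J | Topp of term J
| Tscale of F & term J | Tmul of term J & term J.

Arguments Tq {J}. Arguments Tzero {J}. Arguments Tone {J}.

Inductive cong (J : Type) (E : term J -> term J -> Prop) : term J -> term J -> Prop :=
| c_base a b : E a b -> cong E a b
| c_refl a : cong E a a
| c_sym a b : cong E a b -> cong E b a
| c_trans a b c : cong E a b -> cong E b c -> cong E a c
| c_add a a' b b' : cong E a a' -> cong E b b' -> cong E (Tadd a b) (Tadd a' b')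
| c_opp a a' : cong E a a' -> cong E (Topp a) (Topp a')
| c_scale r a a' : cong E a a' -> cong E (Tscale r a) (Tscale r a')
| c_mul a a' b b' : cong E a a' -> cong E b b' -> cong E (Tmul a b) (Tmul a' b')
| c_addA a b c : cong E (Tadd a (Tadd b c)) (Tadd (Tadd a b) c)
| c_addC a b : cong E (Tadd a b) (Tadd b a)
| c_add0 a : cong E (Tadd Tzero a) a
| c_addN a : cong E (Tadd (Topp a) a) Tzero
| c_scaleA r s a : cong E (Tscale r (Tscale s a)) (Tscale (r * s) a)
| c_scale1 a : cong E (Tscale 1 a) a
| c_scaleDr r a b : cong E (Tscale r (Tadd a b)) (Tadd (Tscale r a) (Tscale r b))
| c_scaleDl r s a : cong E (Tscale (r + s) a) (Tadd (Tscale r a) (Tscale s a))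
| c_mulA a b c : cong E (Tmul a (Tmul b c)) (Tmul (Tmul a b) c)
| c_mul1l a : cong E (Tmul Tone a) a
| c_mul1r a : cong E (Tmul a Tone) a
| c_mulDr a b c : cong E (Tmul a (Tadd b c)) (Tadd (Tmul a b) (Tmul a c))
| c_mulDl a b c : cong E (Tmul (Tadd a b) c) (Tadd (Tmul a c) (Tmul b c))
| c_scaleAl r a b : cong E (Tscale r (Tmul a b)) (Tmul (Tscale r a) b)
| c_scaleAr r a b : cong E (Tscale r (Tmul a b)) (Tmul a (Tscale r b)).

(* generators of the ideal I : q~ q~ - q~ and q~ a q~ - q~ a (a in T(V)) *)
Inductive rel_I (J : Type) : term J -> term J -> Prop :=
| rI_idem : rel_I (Tmul Tq Tq) Tq
| rI_inv a : rel_I (Tmul (Tmul Tq a) Tq) (Tmul Tq a).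

(* the linear extension x |-> x^ of i^(x_j) = x_j, via basis coordinates *)
Definition lincomb (J : Type) (s : seq J) (c : J -> F) : term J :=
  foldr (fun j t => Tadd (Tscale (c j) (Tgen j)) t) Tzero s.

Definition hat (L : lmodType F) (J : eqType) (x : J -> L) (v : L) : term J :=
  let p := epsilon (inhabits (([::] : seq J), (fun _ : J => (0 : F))))
             (fun p : seq J * (J -> F) => v = \sum_(j <- p.1) p.2 j *: x j) in
  lincomb p.1 p.2.

Definition R_gen (L : lmodType F) (br : L -> L -> L) (J : eqType) (x : J -> L)
  (k : F) (u v : L) : term J :=
  let hu := hat x u in let hv := hat x v in
  Tadd (Tadd (Tadd (Tadd (Tadd (Tadd (hat x (br u v))
     (Topp (Tmul hu hv))) (Tmul hv hu)) (Topp (Tmul (Tmul hv Tq) hu)))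
     (Tmul (Tmul hu hv) Tq)) (Topp (Tscale k (Tmul (Tmul hu Tq) hv))))
     (Tscale k (Tmul (Tmul Tq hv) hu)).

(* relations defining U = A^/R = T(V)/(I + R~) *)
Inductive rel_U (L : lmodType F) (br : L -> L -> L) (J : eqType) (x : J -> L)
  (k : F) : term J -> term J -> Prop :=
| rU_I a b : rel_I a b -> rel_U br x k a b
| rU_R u v : rel_U br x k (R_gen br x k u v) Tzero.

Record quot (T : Type) (r : T -> T -> Prop) := Quot {
  qcls : T -> Prop; qclsP : exists t, qcls = r t }.

Definition qpi (T : Type) (r : T -> T -> Prop) (t : T) : quot r :=
  @Quot T r (r t) (ex_intro _ t erefl).

Definition qrepr (T : Type) (r : T -> T -> Prop) (u : quot r) : T :=
  proj1_sig (constructive_indefinite_description _ (qclsP u)).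

Section U.
Variables (L : lmodType F) (br : L -> L -> L) (J : eqType) (x : J -> L) (k : F).
Let r := cong (rel_U br x k).
Let T := quot r.
Let pi := @qpi _ r.
Let rp := @qrepr _ r.

Definition Ualg : algops :=
  @AlgOps T (pi Tzero) (pi Tone)
    (fun a b => pi (Tadd (rp a) (rp b))) (fun a => pi (Topp (rp a)))
    (fun c a => pi (Tscale c (rp a))) (fun a b => pi (Tmul (rp a) (rp b))).

Definition Uqbar : Ualg := pi Tq.
Definition Ui (v : L) : Ualg := pi (hat x v).
End U.

End Defs.

Arguments enveloping4 {F L} br k U qbar i.

(* Main.v *)
From HB Require Import structures.
Require Import Defs.
From mathcomp Require Import all_boot all_order all_algebra.
From mathcomp Require Import boolp.
From Stdlib Require Import ProofIrrelevance ClassicalEpsilon.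
Set Implicit Arguments. Unset Strict Implicit. Unset Printing Implicit Defensive.
Import GRing.Theory.
Local Open Scope ring_scope.

Section Q.
Variables (T : Type) (r : T -> T -> Prop).
Hypothesis rrefl : forall a, r a a.
Hypothesis rsym : forall a b, r a b -> r b a.
Hypothesis rtrans : forall a b c, r a b -> r b c -> r a c.

Lemma quot_ext (u v : quot r) : qcls u = qcls v -> u = v.
Proof.
case: u => cu pu; case: v => cv pv /= E; subst cv.
by rewrite (proof_irrelevance _ pu pv).
Qed.

Lemma qpi_eq a b : r a b -> qpi r a = qpi r b.
Proof.
move=> hab; apply: quot_ext => /=.
apply: funext => t; apply: propext; split => h.
  exact: rtrans (rsym hab) h.
exact: rtrans hab h.
Qed.

Lemma qpi_inj a b : qpi r a = qpi r b -> r a b.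
Proof.
move=> E; have : qcls (qpi r b) b by exact: rrefl.
rewrite -E /=; exact.
Qed.

Lemma qreprP (u : quot r) : qcls u = r (qrepr u).
Proof. rewrite /qrepr; exact (proj2_sig (ClassicalEpsilon.constructive_indefinite_description _ (qclsP u))). Qed.

Lemma qreprK a : r (qrepr (qpi r a)) a.
Proof.
have E := qreprP (qpi r a); simpl in E.
have h := rrefl a; rewrite E in h; exact: h.
Qed.

Lemma qpi_repr (u : quot r) : qpi r (qrepr u) = u.
Proof. by apply: quot_ext => /=; rewrite -qreprP. Qed.
End Q.

Section U.
Variables (F : fieldType) (L : lmodType F) (br : L -> L -> L) (J : eqType)
  (x : J -> L) (k : F).

Notation rU := (cong (rel_U br x k)).
Notation U := (Ualg br x k).
Notation TZ := (@Tzero F J).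
Notation TO := (@Tone F J).
Notation TQ := (@Tq F J).
Fact pi_key : unit. Proof. exact: tt. Qed.
Definition pi : term F J -> U := locked_with pi_key (fun t => qpi rU t).
Lemma piE t : pi t = qpi rU t. Proof. by rewrite /pi unlock. Qed.
Definition rp (u : U) : term F J := qrepr u.

Lemma rU_refl a : rU a a. Proof. exact: c_refl. Qed.
Lemma rU_sym a b : rU a b -> rU b a. Proof. exact: c_sym. Qed.
Lemma rU_trans a b c : rU a b -> rU b c -> rU a c. Proof. exact: c_trans. Qed.

Lemma pi_eq a b : rU a b -> pi a = pi b.
Proof. rewrite !piE; apply: qpi_eq => *; [apply: c_sym | apply: c_trans]; eauto. Qed.

Lemma rpK a : rU (rp (pi a)) a.
Proof. rewrite piE; apply: qreprK => *; exact: c_refl. Qed.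

Lemma pi_rp u : pi (rp u) = u.
Proof. rewrite piE; exact: qpi_repr. Qed.

Lemma qind (P : U -> Prop) : (forall t, P (pi t)) -> forall u, P u.
Proof. by move=> H u; rewrite -(pi_rp u). Qed.

Lemma piD a b : aadd (pi a) (pi b) = pi (Tadd a b).
Proof. transitivity (pi (Tadd (rp (pi a)) (rp (pi b)))); first by rewrite !piE. apply: pi_eq; apply: c_add; exact: rpK. Qed.
Lemma piN a : aopp (pi a) = pi (Topp a).
Proof. transitivity (pi (Topp (rp (pi a)))); first by rewrite !piE. apply: pi_eq; apply: c_opp; exact: rpK. Qed.
Lemma piZ c a : ascale c (pi a) = pi (Tscale c a).
Proof. transitivity (pi (Tscale c (rp (pi a)))); first by rewrite !piE. apply: pi_eq; apply: c_scale; exact: rpK. Qed.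
Lemma piM a b : amul (pi a) (pi b) = pi (Tmul a b).
Proof. transitivity (pi (Tmul (rp (pi a)) (rp (pi b)))); first by rewrite !piE. apply: pi_eq; apply: c_mul; exact: rpK. Qed.
Lemma pi0 : azero U = pi TZ. Proof. by rewrite piE. Qed.
Lemma pi1 : aone U = pi TO. Proof. by rewrite piE. Qed.

Ltac go := match goal with
  | |- forall u : acar _, _ => let v := fresh "v" in intro v; elim/qind: v => v; go
  | |- forall r : _, _ => intro; go
  | _ => idtac end.

Lemma U_alg : is_unital_algebra U.
Proof.
rewrite /is_unital_algebra; cbv zeta.
repeat split.
all: go;
  rewrite ?pi0 ?pi1 ?piD ?piN ?piZ ?piM ?piD ?piN ?piZ ?piM ?piD ?piZ ?piM;
  (apply: pi_eq; first [exact: c_addA | exact: c_addC | exact: c_add0 | exact: c_addN | exact: c_scaleA | exact: c_scale1 | exact: c_scaleDr | exact: c_scaleDl | exact: c_mulA | exact: c_mul1l | exact: c_mul1r | exact: c_mulDr | exact: c_mulDl | exact: c_scaleAl | exact: c_scaleAr]).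
Qed.

Definition UT : Type := acar U.
HB.instance Definition _ := gen_eqMixin UT.
HB.instance Definition _ := gen_choiceMixin UT.
Let UA := U_alg.
Lemma UaddA : associative (@aadd _ U). Proof. by case: UA. Qed.
Lemma UaddC : commutative (@aadd _ U). Proof. by case: UA => _ []. Qed.
Lemma Uadd0 : left_id (azero U) (@aadd _ U). Proof. by case: UA => _ [] _ []. Qed.
Lemma UaddN : left_inverse (azero U) (@aopp _ U) (@aadd _ U). Proof. by case: UA => _ [] _ [] _ []. Qed.
HB.instance Definition _ := GRing.isZmodule.Build UT UaddA UaddC Uadd0 UaddN.
Lemma UscA : forall a b (v : UT), ascale a (ascale b v) = ascale (a * b) v.
Proof. by case: UA => _ [] _ [] _ [] _ []. Qed.
Lemma Usc1 : left_id 1 (@ascale _ U). Proof. by case: UA => _ [] _ [] _ [] _ [] _ []. Qed.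
Lemma UscDr : right_distributive (@ascale _ U) (@GRing.add UT).
Proof. by case: UA => _ [] _ [] _ [] _ [] _ [] _ []. Qed.
Lemma UscDl : forall v : UT, forall a b : F, (ascale (a + b) v : UT) = (ascale a v : UT) + (ascale b v : UT).
Proof. case: UA => _ [] _ [] _ [] _ [] _ [] _ [] _ [] h _ v a b; exact: h. Qed.
HB.instance Definition _ := GRing.Zmodule_isLmodule.Build F UT UscA Usc1 UscDr UscDl.
End U.

Section Agg.
Variables (F : fieldType) (J : eqType).
Definition agg (s : seq J) (c : J -> F) (j : J) : F := \sum_(i <- s | i == j) c i.

Lemma sum_agg (V : lmodType F) (g : J -> V) (s u : seq J) (c : J -> F) :
  uniq u -> {subset s <= u} ->
  \sum_(j <- s) c j *: g j = \sum_(j <- u) agg s c j *: g j.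
Proof.
move=> uu; elim: s => [|i s IH] sub.
  by rewrite big_nil big1 // => j _; rewrite /agg big_nil scale0r.
rewrite big_cons IH; last by move=> j js; apply: sub; rewrite inE js orbT.
have iu : i \in u by apply: sub; rewrite inE eqxx.
rewrite [RHS](eq_bigr (fun j => (if i == j then c i else 0) *: g j + agg s c j *: g j)); last first.
  by move=> j _; rewrite /agg big_cons; case: (i == j); rewrite ?scalerDl ?scale0r ?add0r.
rewrite big_split /=; congr (_ + _).
rewrite (bigD1_seq i) //= eqxx big1 ?addr0 // => j ji.
by rewrite eq_sym (negbTE ji) scale0r.
Qed.
End Agg.

Section V.
Variables (F : fieldType) (L : lmodType F) (br : L -> L -> L) (J : eqType)
  (x : J -> L) (k : F).
Notation U := (Ualg br x k).
Notation UT := (UT br x k).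
Notation pi := (pi br x k).

Lemma piD' a b : (pi (Tadd a b) : UT) = (pi a : UT) + (pi b : UT).
Proof. by rewrite -piD. Qed.
Lemma piZ' c a : (pi (Tscale c a) : UT) = c *: (pi a : UT).
Proof. by rewrite -piZ. Qed.
Lemma pi0' : (pi (@Tzero F J) : UT) = 0.
Proof. by rewrite -pi0. Qed.

Lemma pi_lincomb s c :
  (pi (lincomb s c) : UT) = \sum_(j <- s) c j *: (pi (@Tgen F J j) : UT).
Proof.
elim: s => [|j s IH]; first by rewrite big_nil pi0'.
by rewrite big_cons /= piD' piZ' IH.
Qed.

Hypothesis xB : is_basis x.

Lemma lincomb_eq s c t d :
  \sum_(j <- s) c j *: x j = \sum_(j <- t) d j *: x j ->
  pi (lincomb s c) = pi (lincomb t d).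
Proof.
move=> H.
have uu : uniq (undup (s ++ t)) by exact: undup_uniq.
have ss : {subset s <= undup (s ++ t)} by move=> j; rewrite mem_undup mem_cat => ->.
have st : {subset t <= undup (s ++ t)}.
  by move=> j; rewrite mem_undup mem_cat => ->; rewrite orbT.
have E : forall j, j \in undup (s ++ t) -> agg s c j = agg t d j.
  move=> j ju; apply/eqP; rewrite -subr_eq0; apply/eqP.
  apply: (xB.2 _ (fun j => agg s c j - agg t d j) uu) => //.
  rewrite (eq_bigr (fun j => agg s c j *: x j - agg t d j *: x j)); last first.
    by move=> i _; rewrite scalerBl.
  by rewrite sumrB -(sum_agg x c uu ss) -(sum_agg x d uu st) H subrr.
apply: (@eq_trans _ _ (pi (lincomb t d) : UT)) => //.
rewrite !pi_lincomb (sum_agg _ c uu ss) (sum_agg _ d uu st).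
by apply: eq_big_seq => j ju; rewrite E.
Qed.

Lemma pi_hat v s c : v = \sum_(j <- s) c j *: x j ->
  (pi (hat x v) : UT) = \sum_(j <- s) c j *: (pi (@Tgen F J j) : UT).
Proof.
move=> hv; rewrite -pi_lincomb /hat.
set P := (fun p : seq J * (J -> F) => v = \sum_(j <- p.1) p.2 j *: x j).
have hp : P (ClassicalEpsilon.epsilon (inhabits (([::] : seq J), (fun _ : J => (0 : F)))) P).
  by apply: ClassicalEpsilon.epsilon_spec; exists (s, c).
by apply: lincomb_eq; rewrite -hp.
Qed.
End V.

Lemma zmod6 (V : zmodType) (S m1 m2 m3 m4 m5 m6 : V) :
  S + - m1 + m2 + - m3 + m4 + - m5 + m6 = S - (m1 - m2 + m3 - m4 + m5 - m6).
Proof. by rewrite !opprD !opprK !addrA. Qed.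

Section Ev.
Variables (F : fieldType) (L : lmodType F) (br : L -> L -> L) (J : eqType)
  (x : J -> L) (k : F) (A : algType F) (q : A) (f : L -> A).

Fixpoint ev (t : term F J) : A :=
  match t with
  | Tgen j => f (x j) | Tq => q | Tzero => 0 | Tone => 1
  | Tadd a b => ev a + ev b | Topp a => - ev a
  | Tscale c a => c *: ev a | Tmul a b => ev a * ev b end.

Hypothesis xB : is_basis x.
Hypothesis qq : q * q = q.
Hypothesis finv : forall v, inv_mem q (f v).
Hypothesis flin : forall (a : F) u v, f (a *: u + v) = a *: f u + f v.
Hypothesis fbr : forall u v, f (br u v) = br4 k q (f u) (f v).

Lemma ev_inv t : q * ev t * q = q * ev t.
Proof.
elim: t => [j||||a IHa b IHb|a IHa|c a IHa|a IHa b IHb] /=.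
- exact: finv.
- by rewrite !qq.
- by rewrite mulr0 mul0r.
- by rewrite mulr1 qq.
- by rewrite mulrDr mulrDl IHa IHb.
- by rewrite mulrN mulNr IHa.
- by rewrite -scalerAr -scalerAl IHa.
- by rewrite mulrA -IHa -!mulrA [q * (ev b * q)]mulrA IHb.
Qed.

Lemma f0 : f 0 = 0.
Proof.
have h := flin 1 0 0; rewrite !scale1r addr0 in h.
by apply: (addrI (f 0)); rewrite addr0 -h.
Qed.

Lemma fsum s c : f (\sum_(j <- s) c j *: x j) = \sum_(j <- s) c j *: f (x j).
Proof.
elim: s => [|j s IH]; first by rewrite !big_nil f0.
by rewrite !big_cons flin IH.
Qed.

Lemma ev_lincomb s c : ev (lincomb s c) = \sum_(j <- s) c j *: f (x j).
Proof.
elim: s => [|j s IH]; first by rewrite big_nil.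
by rewrite big_cons /= IH.
Qed.

Lemma ev_hat v : ev (hat x v) = f v.
Proof.
rewrite /hat.
set P := (fun p : seq J * (J -> F) => v = \sum_(j <- p.1) p.2 j *: x j).
have hp : P (ClassicalEpsilon.epsilon (inhabits (([::] : seq J), (fun _ : J => (0 : F)))) P).
  apply: ClassicalEpsilon.epsilon_spec.
  by case: (xB.1 v) => s [c hc]; exists (s, c).
by rewrite ev_lincomb -fsum -hp.
Qed.

Lemma ev_cong a b : cong (rel_U br x k) a b -> ev a = ev b.
Proof.
elim => {a b} /=.
- move=> a b [] {a b}.
  + by move=> a b [] /=; [rewrite qq | move=> t; exact: ev_inv].
  + move=> u v /=; rewrite !ev_hat fbr /br4 zmod6; exact: subrr.
- by [].
- by move=> a b _ ->.
- by move=> a b c _ -> _ ->.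
- by move=> a a' b b' _ -> _ ->.
- by move=> a a' _ ->.
- by move=> r a a' _ ->.
- by move=> a a' b b' _ -> _ ->.
- by move=> *; rewrite addrA.
- by move=> *; rewrite addrC.
- by move=> *; rewrite add0r.
- by move=> *; rewrite addNr.
- by move=> *; rewrite scalerA.
- by move=> *; rewrite scale1r.
- by move=> *; rewrite scalerDr.
- by move=> *; rewrite scalerDl.
- by move=> *; rewrite mulrA.
- by move=> *; rewrite mul1r.
- by move=> *; rewrite mulr1.
- by move=> *; rewrite mulrDr.
- by move=> *; rewrite mulrDl.
- by move=> *; rewrite scalerAl.
- by move=> *; rewrite scalerAr.
Qed.
End Ev.

Lemma zmod6' (V : zmodType) (S m1 m2 m3 m4 m5 m6 : V) :
  S + - m1 + m2 + - m3 + m4 + - m5 + m6 = 0 ->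
  S = m1 + - m2 + m3 + - m4 + m5 + - m6.
Proof. by rewrite zmod6 => /eqP; rewrite subr_eq0 => /eqP. Qed.

Lemma lin_agg (F : fieldType) (J : eqType) (V : lmodType F) (g : J -> V)
   (a : F) s1 c1 s2 c2 :
  a *: (\sum_(j <- s1) c1 j *: g j) + \sum_(j <- s2) c2 j *: g j =
  \sum_(j <- undup (s1 ++ s2)) (a * agg s1 c1 j + agg s2 c2 j) *: g j.
Proof.
have uw : uniq (undup (s1 ++ s2)) by exact: undup_uniq.
have s1w : {subset s1 <= undup (s1 ++ s2)} by move=> j; rewrite mem_undup mem_cat => ->.
have s2w : {subset s2 <= undup (s1 ++ s2)}.
  by move=> j; rewrite mem_undup mem_cat => ->; rewrite orbT.
rewrite (sum_agg g c1 uw s1w) (sum_agg g c2 uw s2w) scaler_sumr -big_split.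
by apply: eq_bigr => j _; rewrite scalerA scalerDl.
Qed.

Unset Implicit Arguments.
Set Strict Implicit.
Theorem proposition5p1 (F : fieldType) (L : lmodType F) (br : L -> L -> L)
  (J : eqType) (x : J -> L) (k : F) :
  right_leibniz br -> is_basis x -> k != 0 ->
  enveloping4 br k (Ualg br x k) (Uqbar br x k) (Ui br x k).
Proof.
move=> _ xB _.
have qbE : Uqbar br x k = pi br x k (@Tq F J) by rewrite piE.
have iE : forall v, Ui br x k v = pi br x k (hat x v) by move=> v; rewrite piE.
have allinv : forall u, inv_memU (Uqbar br x k) u.
  elim/qind => t; rewrite /inv_memU qbE !piM; apply: pi_eq.
  apply: c_base; apply: rU_I; exact: rI_inv.
split.
- exact: U_alg.
- split => //; rewrite qbE piM; apply: pi_eq; apply: c_base; apply: rU_I; exact: rI_idem.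
- move=> a u v; rewrite !iE.
  case: (xB.1 u) => s1 [c1 hu]; case: (xB.1 v) => s2 [c2 hv].
  change ((pi br x k (hat x (a *: u + v)) : UT br x k) =
     a *: (pi br x k (hat x u) : UT br x k) + pi br x k (hat x v)).
  rewrite (pi_hat _ _ xB hu) (pi_hat _ _ xB hv) lin_agg.
  by apply: pi_hat => //; rewrite hu hv lin_agg.
- move=> u v; rewrite /br4U !iE qbE.
  have H : pi br x k (R_gen br x k u v) = pi br x k (@Tzero F J).
    by apply: pi_eq; apply: c_base; exact: rU_R.
  rewrite /R_gen in H.
  rewrite !piD' -!piN !piZ' -!piM pi0' in H.
  exact: (@zmod6' (UT br x k) _ _ _ _ _ _ _ H).
- move=> A q qq f finv flin fbr.
  pose f' := fun u : Ualg br x k => ev x q f (rp u).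
  have f'pi : forall t, f' (pi br x k t) = ev x q f t.
    by move=> t; apply: (ev_cong xB qq finv flin fbr); exact: rpK.
  exists f'; split.
  + split.
    * move=> u v _ _; elim/qind: u => a; elim/qind: v => b.
      by rewrite piD !f'pi.
    * by move=> r u _; elim/qind: u => a; rewrite piZ !f'pi.
    * move=> u v _ _; elim/qind: u => a; elim/qind: v => b.
      by rewrite piM !f'pi.
    * by rewrite pi1 qbE !f'pi.
    * by move=> u _; elim/qind: u => a; rewrite f'pi /inv_mem ev_inv.
  + by move=> v; rewrite iE f'pi ev_hat.
  + move=> g [gD gZ gM [g1 gq] gI] hg u _; elim/qind: u => t; rewrite f'pi.
    have gz : g (pi br x k (@Tzero F J)) = 0.
      have e : pi br x k (@Tzero F J) = aadd (pi br x k (@Tzero F J)) (pi br x k (@Tzero F J)).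
        by rewrite piD; apply: pi_eq; apply: c_sym; exact: c_add0.
      apply: (addrI (g (pi br x k (@Tzero F J)))).
      by rewrite addr0 -gD // -e.
    elim: t => [j||||a IHa b IHb|a IHa|c a IHa|a IHa b IHb] /=.
    * have e : Ui br x k (x j) = pi br x k (@Tgen F J j).
        rewrite iE; rewrite (pi_hat _ _ xB (s := [:: j]) (c := fun _ => 1)).
          by rewrite big_seq1 scale1r.
        by rewrite big_seq1 scale1r.
      by rewrite -e -hg.
    * by rewrite -qbE.
    * exact: gz.
    * by rewrite -pi1.
    * by rewrite -piD gD // IHa IHb.
    * have e : aadd (pi br x k (Topp a)) (pi br x k a) = pi br x k (@Tzero F J).
        by rewrite piD; apply: pi_eq; exact: c_addN.
      have := gD (pi br x k (Topp a)) (pi br x k a) (allinv _) (allinv _); rewrite e gz IHa => h.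
      by apply/eqP; rewrite -addr_eq0 h.
    * by rewrite -piZ gZ // IHa.
    * by rewrite -piM gM // IHa IHb.
Qed.
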